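(* Let $N$ and $N_1$ be compactly supported distribution functions taking finitely many values. Put ${\scriptstyle\Delta}N=N_1-N$ and $N_\theta=N+\theta\,{\scriptstyle\Delta}N$, and define $$\mathbf{u}_\theta=\int_0^\infty N_\theta(t)\,dt,\qquad {\scriptstyle\Delta}\mathbf{u}=\int_0^\infty{\scriptstyle\Delta}N(t)\,dt,\qquad \mathbf{u}_{\scriptstyle\Delta}=\int_0^\infty|{\scriptstyle\Delta}N(t)|\,dt .$$ Then for $\theta\in(0,1)$, $$-\frac{d^2\,\mathbf{u}^*(N_\theta)}{d\theta^2}\ge\frac{(\mathbf{u}_{\scriptstyle\Delta})^2}{\mathbf{u}_\theta}\ge\frac{|{\scriptstyle\Delta}\mathbf{u}|^2}{\mathbf{u}_\theta}.$$
   Context: A distribution function is a nonincreasing function $N:[0,\infty)\to[0,1]$; such functions arise as normalized distribution functions $t\mapsto|I|^{-1}|\{x\in I:u(x)>t\}|$. For a distribution function $N$, $$\mathbf{u}^*(N)=\int_0^\infty\psi_0(N(t))\,dt,\qquad \psi_0(s)=s\ln(e/s).$$ *)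

(* Defs.v *)
From Stdlib Require Import Reals Lra List.
From Coquelicot Require Import Coquelicot.
Open Scope R_scope.

(* A distribution function N : [0,oo) -> [0,1], nonincreasing.
   Represented as a function R -> R; only its values on [0,oo) matter. *)
Definition distr_fn (N : R -> R) : Prop :=
  (forall s t, 0 <= s -> s <= t -> N t <= N s) /\
  (forall t, 0 <= t -> 0 <= N t <= 1).

Definition compact_supp (N : R -> R) : Prop :=
  exists T, forall t, T <= t -> N t = 0.

Definition finitely_valued (N : R -> R) : Prop :=
  exists l : list R, forall t, 0 <= t -> In (N t) l.

(* psi0(s) = s ln(e/s), extended by continuity with psi0(0) = 0 *)
Definition psi0 (s : R) : R :=
  if Rle_dec s 0 then 0 else s * ln (exp 1 / s).

Definition int0oo (f : R -> R) : R :=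
  RInt_gen f (at_point 0) (Rbar_locally p_infty).

Definition ustar (N : R -> R) : R := int0oo (fun t => psi0 (N t)).

Definition DeltaN (N N1 : R -> R) (t : R) : R := N1 t - N t.
Definition Ntheta (N N1 : R -> R) (theta : R) (t : R) : R :=
  N t + theta * DeltaN N N1 t.
Definition u_theta (N N1 : R -> R) (theta : R) : R := int0oo (Ntheta N N1 theta).
Definition Delta_u (N N1 : R -> R) : R := int0oo (DeltaN N N1).
Definition u_Delta (N N1 : R -> R) : R := int0oo (fun t => Rabs (DeltaN N N1 t)).

(* Main.v *)
Require Import Defs.
From Stdlib Require Import Reals Lra List ClassicalEpsilon Classical FunctionalExtensionality.
From Coquelicot Require Import Coquelicot.
Open Scope R_scope.

Lemma is_RInt_zero (a b : R) : is_RInt (fun _ => 0) a b 0.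
Proof.
  pose proof (is_RInt_const (V:=R_NormedModule) a b 0) as H.
  change (is_RInt (fun _ => 0) a b ((b-a)*0)) in H.
  rewrite Rmult_0_r in H. exact H.
Qed.

Lemma is_RInt_plusR (f g : R -> R) a b If Ig :
  is_RInt f a b If -> is_RInt g a b Ig -> is_RInt (fun y => f y + g y) a b (If + Ig).
Proof. intros H1 H2. exact (is_RInt_plus f g a b If Ig H1 H2). Qed.

Lemma is_RInt_scalR (f : R -> R) a b k If :
  is_RInt f a b If -> is_RInt (fun y => k * f y) a b (k * If).
Proof. intros H1. exact (is_RInt_scal f a b k If H1). Qed.

Lemma gen_tail (g : R -> R) (T l : R) :
  0 <= T -> is_RInt g 0 T l -> (forall t, T <= t -> g t = 0) ->
  is_RInt_gen (V:=R_NormedModule) g (at_point 0) (Rbar_locally p_infty) (l + 0).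
Proof.
  intros HT Hi Hz.
  assert (H1 : is_RInt_gen (V:=R_NormedModule) g (at_point 0) (at_point T) l).
  { apply is_RInt_gen_at_point. exact Hi. }
  assert (H2 : is_RInt_gen (V:=R_NormedModule) g (at_point T) (Rbar_locally p_infty) 0).
  { unfold is_RInt_gen, filterlimi, filter_le, filtermapi. intros P HP.
    apply Filter_prod with (fun x => x = T) (fun y => T < y).
    + reflexivity.
    + exists T. auto.
    + intros x y -> Hy. exists 0. split.
      * simpl. apply is_RInt_ext with (fun _ => 0); [|apply is_RInt_zero].
        intros u Hu. rewrite Rmin_left in Hu by lra. rewrite Rmax_right in Hu by lra.
        symmetry; apply Hz; lra.
      * apply locally_singleton; exact HP. }
  exact (is_RInt_gen_Chasles (V:=R_NormedModule) (Fa:=at_point 0) (Fc:=Rbar_locally p_infty) g T l 0 H1 H2).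
Qed.

Lemma int0oo_tail (g : R -> R) (T l : R) :
  0 <= T -> is_RInt g 0 T l -> (forall t, T <= t -> g t = 0) -> int0oo g = l.
Proof.
  intros HT Hi Hz. unfold int0oo.
  pose proof (gen_tail g T l HT Hi Hz) as H.
  rewrite Rplus_0_r in H.
  apply is_RInt_gen_unique. exact H.
Qed.

Definition ind (Q : R -> Prop) (t : R) : R :=
  if excluded_middle_informative (Q t) then 1 else 0.

Lemma ind_int (Q : R -> Prop) (T : R) : 0 <= T ->
  (forall s t, 0 <= s -> s <= t -> Q t -> Q s) -> ex_RInt (ind Q) 0 T.
Proof.
  intros HT Hdc.
  set (E := fun t => t = 0 \/ (0 <= t <= T /\ Q t)).
  assert (Hb : bound E). { exists T. intros x [->|[[_ H] _]]; lra. }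
  assert (He : exists x, E x). { exists 0; left; reflexivity. }
  destruct (completeness E Hb He) as [s [Hub Hlub]].
  assert (Hs0 : 0 <= s) by (apply Hub; left; reflexivity).
  assert (HsT : s <= T). { apply Hlub. intros x [->|[[_ H] _]]; lra. }
  assert (H1 : is_RInt (V:=R_NormedModule) (ind Q) 0 s ((s - 0) * 1)).
  { apply is_RInt_ext with (fun _ => 1). 2: exact (is_RInt_const (V:=R_NormedModule) 0 s 1).
    intros x Hx. rewrite Rmin_left in Hx by lra. rewrite Rmax_right in Hx by lra.
    unfold ind. destruct (excluded_middle_informative (Q x)) as [Hq|Hq]; [reflexivity|].
    exfalso.
    assert (Hex : exists e, E e /\ x < e).
    { apply not_all_not_ex. intro Hn. assert (Hx' : is_upper_bound E x).
      { intros e He'. destruct (Rle_dec e x) as [?|Hlt]; [assumption|].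
        exfalso. apply (Hn e). split; [exact He'| lra]. }
      specialize (Hlub x Hx'). lra. }
    destruct Hex as [e [[->|[[He0 HeT] Hqe]] Hxe]]; [lra|].
    apply Hq. apply (Hdc x e); [lra|lra|exact Hqe]. }
  assert (H2 : is_RInt (V:=R_NormedModule) (ind Q) s T ((T - s) * 0)).
  { apply is_RInt_ext with (fun _ => 0). 2: exact (is_RInt_const (V:=R_NormedModule) s T 0).
    intros x Hx. rewrite Rmin_left in Hx by lra. rewrite Rmax_right in Hx by lra.
    unfold ind. destruct (excluded_middle_informative (Q x)) as [Hq|Hq]; [|reflexivity].
    exfalso. assert (Hx2 : E x) by (right; split; [lra|exact Hq]).
    specialize (Hub x Hx2). lra. }
  eexists. exact (is_RInt_Chasles (V:=R_NormedModule) _ 0 s T _ _ H1 H2).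
Qed.

Definition pind (N N1 : R -> R) (a b t : R) : R :=
  ind (fun t => a <= N t /\ b <= N1 t) t - ind (fun t => a < N t /\ b <= N1 t) t
  - ind (fun t => a <= N t /\ b < N1 t) t + ind (fun t => a < N t /\ b < N1 t) t.

Ltac kill := repeat match goal with
 | H : _ /\ _ |- _ => destruct H
 | H : ~ (_ /\ _) |- _ => apply not_and_or in H; destruct H
 | H : ~ (_ <= _) |- _ => apply Rnot_le_lt in H
 | H : ~ (_ < _) |- _ => apply Rnot_lt_le in H
 end.

Ltac dest_ind := unfold pind, ind;
  repeat match goal with |- context [excluded_middle_informative ?P] =>
    destruct (excluded_middle_informative P) end.

Lemma pind_eq N N1 t : pind N N1 (N t) (N1 t) t = 1.
Proof. dest_ind; kill; lra. Qed.

Lemma pind_ne N N1 a b t : N t <> a \/ N1 t <> b -> pind N N1 a b t = 0.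
Proof.
  intros [H|H]; apply Rdichotomy in H; dest_ind; kill; lra.
Qed.

Lemma pind_ge0 N N1 a b t : 0 <= pind N N1 a b t.
Proof.
  destruct (Req_dec_T (N t) a) as [<-|H].
  - destruct (Req_dec_T (N1 t) b) as [<-|H].
    + rewrite pind_eq; lra.
    + rewrite pind_ne; auto; lra.
  - rewrite pind_ne; auto; lra.
Qed.

Lemma pind_int N N1 a b T : distr_fn N -> distr_fn N1 -> 0 <= T ->
  ex_RInt (pind N N1 a b) 0 T.
Proof.
  intros [HN _] [HN1 _] HT.
  assert (Hi : forall (P1 P2 : R -> R -> Prop),
    (forall c x y, x <= y -> P1 c x -> P1 c y) ->
    (forall c x y, x <= y -> P2 c x -> P2 c y) ->
    ex_RInt (ind (fun t => P1 a (N t) /\ P2 b (N1 t))) 0 T).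
  { intros P1 P2 H1 H2. apply ind_int; auto. intros s t Hs Hst [Ha Hb].
    pose proof (HN s t Hs Hst); pose proof (HN1 s t Hs Hst). split.
    - exact (H1 a (N t) (N s) H Ha). - exact (H2 b (N1 t) (N1 s) H0 Hb). }
  assert (Hle : forall c x y : R, x <= y -> c <= x -> c <= y) by (intros; lra).
  assert (Hlt : forall c x y : R, x <= y -> c < x -> c < y) by (intros; lra).
  pose proof (Hi _ _ Hle Hle) as I1. pose proof (Hi _ _ Hlt Hle) as I2.
  pose proof (Hi _ _ Hle Hlt) as I3. pose proof (Hi _ _ Hlt Hlt) as I4.
  cbv beta in I1, I2, I3, I4.
  pose proof (ex_RInt_minus (V:=R_NormedModule) _ _ 0 T I1 I2) as J1.
  pose proof (ex_RInt_minus (V:=R_NormedModule) _ _ 0 T J1 I3) as J2.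
  pose proof (ex_RInt_plus (V:=R_NormedModule) _ _ 0 T J2 I4) as J3.
  exact J3.
Qed.

Definition sumL (P : list (R*R)) (g : R*R -> R) : R :=
  fold_right (fun p acc => g p + acc) 0 P.

Lemma sumL_ext P g h : (forall p, In p P -> g p = h p) -> sumL P g = sumL P h.
Proof.
  induction P as [|x P IH]; simpl; intros H; auto.
  rewrite H by auto. rewrite IH; auto.
Qed.

Lemma sumL_plus P g h : sumL P (fun p => g p + h p) = sumL P g + sumL P h.
Proof. induction P; simpl; [ring|rewrite IHP; ring]. Qed.

Lemma sumL_scal P k g : sumL P (fun p => k * g p) = k * sumL P g.
Proof. induction P; simpl; [ring|rewrite IHP; ring]. Qed.

Lemma sumL_ge0 P g : (forall p, In p P -> 0 <= g p) -> 0 <= sumL P g.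
Proof.
  induction P as [|x P IH]; simpl; intros H; [lra|].
  pose proof (H x (or_introl eq_refl)). pose proof (IH (fun p Hp => H p (or_intror Hp))). lra.
Qed.

Lemma sumL_abs P g : Rabs (sumL P g) <= sumL P (fun p => Rabs (g p)).
Proof.
  induction P as [|x P IH]; simpl.
  - rewrite Rabs_R0; lra.
  - eapply Rle_trans; [apply Rabs_triang|]. lra.
Qed.

Lemma sumL_zero P g : (forall p, In p P -> g p = 0) -> sumL P g = 0.
Proof.
  induction P as [|x P IH]; simpl; intros H; auto.
  rewrite H by auto. rewrite IH; auto. ring.
Qed.

Lemma sumL_delta P g x : NoDup P -> In x P ->
  (forall p, In p P -> p <> x -> g p = 0) -> sumL P g = g x.
Proof.
  induction P as [|y P IH]; simpl; intros HN Hx H; [contradiction|].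
  inversion HN as [|? ? Hy HN']; subst.
  destruct Hx as [<-|Hx].
  - rewrite sumL_zero; [ring|]. intros p Hp. apply H; auto. intro; subst; auto.
  - rewrite H; auto. rewrite IH; auto. ring. intro; subst; auto.
Qed.

Lemma build_P (l : list (R*R)) (Q : R*R -> Prop) :
  exists P, NoDup P /\ forall p, In p P <-> In p l /\ Q p.
Proof.
  induction l as [|x l [P [HN HP]]].
  - exists nil. split; [constructor|]. simpl; tauto.
  - destruct (classic (Q x /\ ~ In x P)) as [[Hq Hn]|Hno].
    + exists (x :: P). split; [constructor; auto|]. intro p; simpl.
      specialize (HP p). split.
      * intros [<-|Hp]; [tauto|]. apply HP in Hp. tauto.
      * intros [[<-|Hp] Hq']; [tauto|]. right. apply HP. tauto.
    + exists P. split; auto. intro p; simpl. pose proof (HP p) as HPp. split; [tauto|].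
      intros [[<-|Hi] Hq]; [|tauto].
      apply NNPP; intro Hni. apply Hno. split; auto.
Qed.

Definition mu (N N1 : R -> R) (T : R) (p : R*R) : R := RInt (pind N N1 (fst p) (snd p)) 0 T.

Lemma mu_ge0 N N1 T p : distr_fn N -> distr_fn N1 -> 0 <= T -> 0 <= mu N N1 T p.
Proof.
  intros H1 H2 HT. unfold mu. apply RInt_ge_0; auto.
  apply pind_int; auto. intros; apply pind_ge0.
Qed.

Lemma decomp (N N1 : R -> R) (P : list (R*R)) (T : R) (G : R -> R -> R) :
  distr_fn N -> distr_fn N1 -> 0 <= T ->
  NoDup P -> (forall t, 0 <= t -> ~ (N t = 0 /\ N1 t = 0) -> In (N t, N1 t) P) ->
  (forall t, T <= t -> N t = 0 /\ N1 t = 0) -> G 0 0 = 0 ->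
  int0oo (fun t => G (N t) (N1 t)) = sumL P (fun p => G (fst p) (snd p) * mu N N1 T p).
Proof.
  intros HD HD1 HT HN Hcov Hsupp HG.
  apply int0oo_tail with T; auto.
  - apply is_RInt_ext with (fun t => sumL P (fun p => G (fst p) (snd p) * pind N N1 (fst p) (snd p) t)).
    + intros x Hx. rewrite Rmin_left in Hx by lra. rewrite Rmax_right in Hx by lra.
      destruct (classic (In (N x, N1 x) P)) as [Hin|Hnin].
      * rewrite (sumL_delta P _ (N x, N1 x)); auto.
        -- simpl. rewrite pind_eq; ring.
        -- intros [a b] Hp Hne. rewrite pind_ne; [ring|]. simpl.
           destruct (Req_dec_T (N x) a) as [Ea|Ea]; [|left; auto].
           right. intro Eb. apply Hne. subst. reflexivity.
      * assert (Hz : N x = 0 /\ N1 x = 0).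
        { apply NNPP. intro Hc. apply Hnin. apply Hcov; auto. lra. }
        destruct Hz as [Hz1 Hz2]. rewrite Hz1, Hz2, HG.
        apply sumL_zero. intros [a b] Hp. rewrite pind_ne; [ring|]. simpl.
        destruct (Req_dec_T (N x) a) as [Ea|Ea]; [|left; auto].
        right. intro Eb. apply Hnin. rewrite Ea, Eb. exact Hp.
    + clear - HD HD1 HT. induction P as [|y P IH]; simpl.
      * apply is_RInt_zero.
      * apply is_RInt_plusR.
        -- apply is_RInt_scalR. apply (RInt_correct (V:=R_CompleteNormedModule)). apply pind_int; auto.
        -- exact IH.
  - intros t Ht. destruct (Hsupp t Ht) as [-> ->]. exact HG.
Qed.

Lemma psi0_der s : 0 < s -> is_derive psi0 s (- ln s).
Proof.
  intros Hs.
  assert (H : is_derive (fun u : R => u * (1 - ln u)) s (- ln s)).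
  { auto_derive. exact Hs. field. lra. }
  apply is_derive_ext_loc with (fun u => u * (1 - ln u)).
  - apply (filter_imp (fun u => 0 < u)); [| exact (open_gt 0 s Hs)].
    intros u Hu. unfold psi0. destruct (Rle_dec u 0); [lra|].
    rewrite ln_div, ln_exp; try reflexivity; try apply exp_pos; try exact Hu.
  - exact H.
Qed.

Lemma is_derive_sumL (P : list (R*R)) (f df : R*R -> R -> R) x :
 (forall p, In p P -> is_derive (f p) x (df p x)) ->
 is_derive (fun y => sumL P (fun p => f p y)) x (sumL P (fun p => df p x)).
Proof.
  induction P as [|q P IH]; simpl; intros H.
  - exact (is_derive_const (K:=R_AbsRing) (V:=R_NormedModule) 0 x).
  - exact (is_derive_plus (K:=R_AbsRing) (V:=R_NormedModule) _ _ x _ _ (H q (or_introl eq_refl)) (IH (fun p Hp => H p (or_intror Hp)))).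
Qed.

Lemma loc01 x : 0 < x < 1 -> locally x (fun y => 0 < y < 1).
Proof.
  intros Hx. apply filter_and; [exact (open_gt 0 x (proj1 Hx)) | exact (open_lt 1 x (proj2 Hx))].
Qed.

Lemma cpos a b y : 0 <= a -> 0 <= b -> 0 < a + b -> 0 < y < 1 -> 0 < a + y * (b - a).
Proof.
  intros Ha Hb Hab Hy.
  replace (a + y * (b - a)) with ((1 - y) * a + y * b) by ring.
  destruct (Rle_lt_or_eq_dec 0 a Ha) as [Ha'|Ha'].
  - assert (0 < (1 - y) * a) by (apply Rmult_lt_0_compat; lra).
    assert (0 <= y * b) by (apply Rmult_le_pos; lra). lra.
  - subst a. assert (0 < y * b) by (apply Rmult_lt_0_compat; lra). lra.
Qed.

Lemma term1 a b m x : 0 < a + x * (b - a) ->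
  is_derive (fun y => psi0 (a + y * (b - a)) * m) x ((- ln (a + x * (b - a)) * (b - a)) * m).
Proof.
  intros Hc.
  assert (Hl : is_derive (fun y : R => a + y * (b - a)) x (b - a)).
  { auto_derive. exact I. ring. }
  pose proof (is_derive_comp (K:=R_AbsRing) (V:=R_NormedModule) psi0 (fun y => a + y * (b - a)) x _ _ (psi0_der _ Hc) Hl) as H1.
  pose proof (is_derive_scal_l (K:=R_AbsRing) (V:=R_NormedModule) _ x _ m H1) as H2.
  replace ((- ln (a + x * (b - a)) * (b - a)) * m) with (((b - a) * (- ln (a + x * (b - a)))) * m) by ring.
  exact H2.
Qed.

Lemma term2 a b m x : 0 < a + x * (b - a) ->
  is_derive (fun y => (- ln (a + y * (b - a)) * (b - a)) * m) x ((- ((b - a) ^ 2 / (a + x * (b - a)))) * m).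
Proof.
  intros Hc. auto_derive. exact Hc. field. lra.
Qed.

Theorem lemma5p1 (N N1 : R -> R) :
  distr_fn N -> distr_fn N1 ->
  compact_supp N -> compact_supp N1 ->
  finitely_valued N -> finitely_valued N1 ->
  forall theta, 0 < theta < 1 ->
    ex_derive (fun th => ustar (Ntheta N N1 th)) theta /\
    ex_derive_n (fun th => ustar (Ntheta N N1 th)) 2 theta /\
    - Derive_n (fun th => ustar (Ntheta N N1 th)) 2 theta
      >= (u_Delta N N1) ^ 2 / u_theta N N1 theta /\
    (u_Delta N N1) ^ 2 / u_theta N N1 theta
      >= (Rabs (Delta_u N N1)) ^ 2 / u_theta N N1 theta.
Proof.
  intros HD HD1 [T0 HT0] [T1 HT1] [L HL] [L1 HL1] theta Hth.
  set (T := Rmax 0 (Rmax T0 T1)).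
  assert (HT : 0 <= T) by apply Rmax_l.
  destruct (build_P (list_prod L L1) (fun p => 0 <= fst p /\ 0 <= snd p /\ 0 < fst p + snd p)) as [P [HN HP]].
  assert (Hcov : forall t, 0 <= t -> ~ (N t = 0 /\ N1 t = 0) -> In (N t, N1 t) P).
  { intros t Ht Hc. apply HP. split. { apply in_prod; auto. } simpl.
    destruct HD as [_ Hb]. destruct HD1 as [_ Hb1]. specialize (Hb t Ht). specialize (Hb1 t Ht).
    split; [lra|split; [lra|]]. destruct (Rlt_dec 0 (N t + N1 t)) as [?|Hn]; auto.
    exfalso; apply Hc; lra. }
  assert (Hsupp : forall t, T <= t -> N t = 0 /\ N1 t = 0).
  { intros t Ht. pose proof (Rmax_r 0 (Rmax T0 T1)); pose proof (Rmax_l T0 T1);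
    pose proof (Rmax_r T0 T1). fold T in H. split; [apply HT0 | apply HT1]; lra. }
  assert (HQ : forall p, In p P -> 0 <= fst p /\ 0 <= snd p /\ 0 < fst p + snd p)
    by (intros p Hp; apply HP; exact Hp).
  set (m := mu N N1 T).
  assert (Hm : forall p, 0 <= m p) by (intro; apply mu_ge0; auto).
  set (S := fun th => sumL P (fun p => psi0 (fst p + th * (snd p - fst p)) * m p)).
  assert (HS : forall th, ustar (Ntheta N N1 th) = S th).
  { intro th. unfold ustar, Ntheta, DeltaN, S.
    assert (G0 : psi0 (0 + th * (0 - 0)) = 0).
    { replace (0 + th * (0 - 0)) with 0 by ring. unfold psi0. destruct (Rle_dec 0 0); lra. }
    exact (decomp N N1 P T (fun a b => psi0 (a + th * (b - a))) HD HD1 HT HN Hcov Hsupp G0). }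
  set (F1 := fun th => sumL P (fun p => (- ln (fst p + th * (snd p - fst p)) * (snd p - fst p)) * m p)).
  set (F2 := fun th => sumL P (fun p => (- ((snd p - fst p) ^ 2 / (fst p + th * (snd p - fst p)))) * m p)).
  assert (Hc : forall y, 0 < y < 1 -> forall p, In p P -> 0 < fst p + y * (snd p - fst p)).
  { intros y Hy p Hp. destruct (HQ p Hp) as [? [? ?]]. apply cpos; auto. }
  assert (HDa : forall y, 0 < y < 1 -> is_derive S y (F1 y)).
  { intros y Hy. unfold S, F1.
    apply (is_derive_sumL P (fun p th => psi0 (fst p + th * (snd p - fst p)) * m p)
      (fun p th => (- ln (fst p + th * (snd p - fst p)) * (snd p - fst p)) * m p)).
    intros p Hp. apply term1. apply Hc; auto. }
  assert (HDb : forall y, 0 < y < 1 -> is_derive F1 y (F2 y)).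
  { intros y Hy. unfold F1, F2.
    apply (is_derive_sumL P (fun p th => (- ln (fst p + th * (snd p - fst p)) * (snd p - fst p)) * m p)
      (fun p th => (- ((snd p - fst p) ^ 2 / (fst p + th * (snd p - fst p)))) * m p)).
    intros p Hp. apply term2. apply Hc; auto. }
  assert (Hloc : locally theta (fun y => F1 y = Derive_n S 1 y)).
  { apply (filter_imp (fun y => 0 < y < 1)); [|apply loc01; auto].
    intros y Hy. simpl. symmetry. apply is_derive_unique. apply HDa; auto. }
  assert (H2 : is_derive (Derive_n S 1) theta (F2 theta)).
  { apply is_derive_ext_loc with F1; auto. }
  assert (E2 : Derive_n S 2 theta = F2 theta).
  { change (Derive (Derive_n S 1) theta = F2 theta). apply is_derive_unique. exact H2. }
  assert (EU : u_theta N N1 theta = sumL P (fun p => (fst p + theta * (snd p - fst p)) * m p)).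
  { unfold u_theta, Ntheta, DeltaN.
    assert (G0 : 0 + theta * (0 - 0) = 0) by ring.
    exact (decomp N N1 P T (fun a b => a + theta * (b - a)) HD HD1 HT HN Hcov Hsupp G0). }
  assert (EA : u_Delta N N1 = sumL P (fun p => Rabs (snd p - fst p) * m p)).
  { unfold u_Delta, DeltaN.
    assert (G0 : Rabs (0 - 0) = 0) by (rewrite Rminus_0_r; apply Rabs_R0).
    exact (decomp N N1 P T (fun a b => Rabs (b - a)) HD HD1 HT HN Hcov Hsupp G0). }
  assert (EB : Delta_u N N1 = sumL P (fun p => (snd p - fst p) * m p)).
  { unfold Delta_u, DeltaN.
    assert (G0 : 0 - 0 = 0) by ring.
    exact (decomp N N1 P T (fun a b => b - a) HD HD1 HT HN Hcov Hsupp G0). }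
  split.
  { apply (ex_derive_ext (K:=R_AbsRing) (V:=R_NormedModule) S); [intro t; symmetry; apply HS|].
    exists (F1 theta); apply HDa; auto. }
  split.
  { apply (ex_derive_n_ext S); [intro t; symmetry; apply HS|].
    change (ex_derive (Derive_n S 1) theta); exists (F2 theta); exact H2. }
  rewrite (Derive_n_ext _ S 2 theta HS).
  rewrite E2, EU, EA, EB.
  set (U := sumL P (fun p => (fst p + theta * (snd p - fst p)) * m p)).
  set (A := sumL P (fun p => Rabs (snd p - fst p) * m p)).
  set (B := sumL P (fun p => (snd p - fst p) * m p)).
  set (D := sumL P (fun p => (snd p - fst p) ^ 2 / (fst p + theta * (snd p - fst p)) * m p)).
  assert (ED : - F2 theta = D).
  { unfold F2, D. replace (- sumL P _) with (-1 * sumL P (fun p => (- ((snd p - fst p) ^ 2 / (fst p + theta * (snd p - fst p)))) * m p)) by ring.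
    rewrite <- sumL_scal. apply sumL_ext. intros; ring. }
  rewrite ED.
  assert (HU : 0 <= U).
  { apply sumL_ge0. intros p Hp. apply Rmult_le_pos; [left; apply Hc; auto | apply Hm]. }
  assert (HDp : 0 <= D).
  { apply sumL_ge0. intros p Hp. apply Rmult_le_pos; [|apply Hm].
    unfold Rdiv. apply Rmult_le_pos; [apply pow2_ge_0 | left; apply Rinv_0_lt_compat; apply Hc; auto]. }
  assert (HBA : Rabs B <= A).
  { eapply Rle_trans; [apply sumL_abs|]. right. apply sumL_ext. intros p Hp.
    rewrite Rabs_mult, (Rabs_pos_eq (m p)); auto. }
  destruct (Rle_lt_or_eq_dec 0 U HU) as [HUp|HU0].
  2:{ rewrite <- HU0. unfold Rdiv. rewrite Rinv_0, !Rmult_0_r. lra. }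
  split.
  - set (lam := A / U).
    assert (Hs : 0 <= sumL P (fun p => (Rabs (snd p - fst p) - lam * (fst p + theta * (snd p - fst p))) ^ 2
                     / (fst p + theta * (snd p - fst p)) * m p)).
    { apply sumL_ge0. intros p Hp. apply Rmult_le_pos; [|apply Hm].
      unfold Rdiv. apply Rmult_le_pos; [apply pow2_ge_0 | left; apply Rinv_0_lt_compat; apply Hc; auto]. }
    rewrite (sumL_ext P _ (fun p => ((snd p - fst p) ^ 2 / (fst p + theta * (snd p - fst p)) * m p
        + (-2 * lam) * (Rabs (snd p - fst p) * m p)) + lam ^ 2 * ((fst p + theta * (snd p - fst p)) * m p))) in Hs.
    2:{ intros p Hp. pose proof (Hc theta Hth p Hp).
        rewrite <- (pow2_abs (snd p - fst p)). field. lra. }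
    rewrite sumL_plus, sumL_plus, sumL_scal, sumL_scal in Hs. fold D A U in Hs.
    assert (E1 : A ^ 2 / U = lam * A) by (unfold lam; field; lra).
    assert (E3 : lam ^ 2 * U = lam * A) by (unfold lam; field; lra).
    lra.
  - apply Rle_ge. unfold Rdiv. apply Rmult_le_compat_r; [left; apply Rinv_0_lt_compat; exact HUp|].
    apply pow_incr. split; [apply Rabs_pos | exact HBA].
Qed.
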